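(* The rational functions $A_G(t/|G|)$ and $B_G(t/|G|)$ are family invariants of the finite group $G$; that is, if $G$ and $H$ are isoclinic finite groups, then $A_G(t/|G|)=A_H(t/|H|)$ and $B_G(t/|G|)=B_H(t/|H|)$.
   Context: For a finite group $G$ and $n\ge 0$, $G$ acts on $G^n$ by simultaneous conjugation. Let $G^{(n)}\subseteq G^n$ be the set of $n$-tuples of pairwise commuting elements. Let $\alpha_{G,n}$ (resp. $\beta_{G,n}$) be the number of $G$-orbits on $G^n$ (resp. on $G^{(n)}$), and set $A_G(t)=\sum_{n\ge0}\alpha_{G,n}t^n$, $B_G(t)=\sum_{n\ge0}\beta_{G,n}t^n$ (rational functions of $t$). Two finite groups $G$ and $H$ are isoclinic if there exist isomorphisms $\theta:G/Z(G)\to H/Z(H)$ and $\phi:G'\to H'$ (commutator subgroups) such that $\phi([g_1,g_2])=[h_1,h_2]$ whenever $\theta(g_iZ(G))=h_iZ(H)$, $i=1,2$. A family invariant is a quantity depending on a group that takes the same value on any two isoclinic groups. *)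

(* Defs.v *)
From mathcomp Require Import all_boot all_order all_algebra all_fingroup all_solvable.
Set Implicit Arguments.
Unset Strict Implicit.
Unset Printing Implicit Defensive.
Import GRing.Theory.
Local Open Scope group_scope.

Section Defs.
Variable gT : finGroupType.

Definition tuples_in (G : {group gT}) (n : nat) : {set {ffun 'I_n -> gT}} :=
  [set t : {ffun 'I_n -> gT} | [forall i, t i \in G]].

Definition comm_tuples_in (G : {group gT}) (n : nat) : {set {ffun 'I_n -> gT}} :=
  [set t : {ffun 'I_n -> gT} | [forall i, t i \in G] &&
     [forall i, forall j, t i * t j == t j * t i]].

Definition conj_tuple (n : nat) (t : {ffun 'I_n -> gT}) (g : gT) : {ffun 'I_n -> gT} :=
  [ffun i => t i ^ g].

Definition conj_orbit (G : {group gT}) (n : nat) (t : {ffun 'I_n -> gT}) :=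
  [set conj_tuple t g | g in G].

Definition alpha (G : {group gT}) (n : nat) : nat :=
  #|[set conj_orbit G t | t in tuples_in G n]|.

Definition beta (G : {group gT}) (n : nat) : nat :=
  #|[set conj_orbit G t | t in comm_tuples_in G n]|.
End Defs.

Definition isoclinic (gT hT : finGroupType) (G : {group gT}) (H : {group hT}) : Prop :=
  exists (theta : {morphism G / 'Z(G) >-> coset_of 'Z(H)})
         (phi : {morphism G^`(1) >-> hT}),
  [/\ isom (G / 'Z(G)) (H / 'Z(H)) theta,
      isom G^`(1) H^`(1) phi &
      forall g1 g2 h1 h2, g1 \in G -> g2 \in G -> h1 \in H -> h2 \in H ->
        theta (coset 'Z(G) g1) = coset 'Z(H) h1 ->
        theta (coset 'Z(G) g2) = coset 'Z(H) h2 ->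
        phi [~ g1, g2] = [~ h1, h2]].

(* Main.v *)
Require Import Defs.
From mathcomp Require Import all_boot all_order all_algebra all_fingroup all_solvable.
From mathcomp Require Import ring.
Import GRing.Theory Num.Theory.
Set Implicit Arguments.
Unset Strict Implicit.
Unset Printing Implicit Defensive.

Section Act.
Variables (gT : finGroupType) (n : nat).
Local Open Scope group_scope.
Lemma ct1 : (@conj_tuple gT n)^~ 1 =1 id.
Proof. by move=> t; apply/ffunP=> i; rewrite ffunE conjg1. Qed.
Lemma ctM t : act_morph (@conj_tuple gT n) t.
Proof. by move=> a b; apply/ffunP=> i; rewrite !ffunE conjgM. Qed.
Definition ctact := TotalAction ct1 ctM.

Lemma alphaE (G : {group gT}) : alpha G n = #|orbit ctact G @: tuples_in G n|.
Proof. by []. Qed.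
Lemma betaE (G : {group gT}) : beta G n = #|orbit ctact G @: comm_tuples_in G n|.
Proof. by []. Qed.
End Act.

Section Quo.
Variables (gT : finGroupType) (G : {group gT}).
Local Open Scope group_scope.
Local Notation Z := 'Z(G).
Local Notation Q := (G / 'Z(G)).

Lemma GsubN : G \subset 'N(Z).
Proof. exact: normal_norm (center_normal G). Qed.

Lemma repr_inG a : a \in Q -> repr a \in G.
Proof.
move=> Qa; suff: repr a \in coset Z @*^-1 Q by rewrite quotientGK // center_normal.
apply: mem_morphpre; first exact: repr_coset_norm.
by rewrite /= coset_reprK.
Qed.

Lemma fiber_card a : a \in Q ->
  #|[pred x | (x \in G) && (coset Z x == a)]| = #|Z|.
Proof.
move=> Qa; rewrite -(card_rcoset Z (repr a)); apply: eq_card => x /=.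
have Na : repr a \in 'N(Z) := repr_coset_norm a.
apply/idP/idP.
  case/andP=> Gx /eqP ex; apply/rcoset_kercosetP => //.
    exact: (subsetP GsubN).
  by rewrite coset_reprK.
case/rcosetP=> z Zz ->.
have Gz : z \in G := subsetP (center_sub G) z Zz.
have Gxa : z * repr a \in G by rewrite groupM // repr_inG.
rewrite inE /= Gxa /=; apply/eqP.
by rewrite coset_kerl // coset_reprK.
Qed.

Lemma sum_coset (F : coset_of Z -> nat) :
  \sum_(x in G) F (coset Z x) = (#|Z| * \sum_(a in Q) F a)%N.
Proof.
rewrite (partition_big (coset Z) (mem Q)) /=; last by move=> x Gx; exact: mem_quotient.
rewrite big_distrr; apply: eq_bigr => a Qa.
rewrite (eq_bigr (fun _ => F a)) => [|x /andP[_ /eqP->]//].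
by rewrite sum_nat_const fiber_card // mulnC.
Qed.

Definition cmq (a c : coset_of Z) := repr a * repr c == repr c * repr a.

Lemma repr_cosetE x : x \in G -> exists2 z, z \in Z & repr (coset Z x) = z * x.
Proof.
move=> Gx; apply/rcosetP; apply/rcoset_kercosetP.
- exact: repr_coset_norm.
- exact: (subsetP GsubN).
by rewrite coset_reprK.
Qed.

Lemma cmqE x y : x \in G -> y \in G -> cmq (coset Z x) (coset Z y) = (x * y == y * x).
Proof.
move=> Gx Gy; rewrite /cmq.
have [z1 Z1 ->] := repr_cosetE Gx; have [z2 Z2 ->] := repr_cosetE Gy.
case/subcentP: Z1 => _ c1; case/subcentP: (Z2) => Gz2 c2.
have e1 : z1 * x * (z2 * y) = z1 * z2 * (x * y).
  by rewrite -!mulgA; congr (_ * _); rewrite !mulgA (c2 x Gx).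
have e2 : z2 * y * (z1 * x) = z1 * z2 * (y * x).
  by rewrite -(mulgA z2) (mulgA y) -(c1 y Gy) -(mulgA z1) mulgA -(c1 z2 Gz2).
rewrite e1 e2; exact: (inj_eq (mulgI _)).
Qed.
End Quo.

Lemma foldr_const (T : Type) (s : seq T) c : foldr muln 1 [seq c | _ <- s] = c ^ size s.
Proof. by elim: s => //= _ s ->; rewrite expnS. Qed.

Section Lift.
Variables (gT : finGroupType) (G : {group gT}) (n : nat).
Local Open Scope group_scope.
Local Notation Z := 'Z(G).
Local Notation Q := (G / 'Z(G)).

Definition ctup (t : {ffun 'I_n -> gT}) : {ffun 'I_n -> coset_of Z} :=
  [ffun i => coset Z (t i)].

Lemma card_lift (P : pred {ffun 'I_n -> coset_of Z}) :
  #|[set t : {ffun 'I_n -> gT} | [forall i, t i \in G] && P (ctup t)]| =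
  (#|Z| ^ n * #|[set s : {ffun 'I_n -> coset_of Z} | [forall i, s i \in Q] && P s]|)%N.
Proof.
rewrite -!sum1_card.
rewrite (partition_big ctup (mem [set s : {ffun 'I_n -> coset_of Z} | [forall i, s i \in Q] && P s])) /=; last first.
  move=> t; rewrite !inE => /andP[/forallP Gt Pt]; rewrite Pt andbT.
  by apply/forallP => i; rewrite ffunE mem_quotient.
rewrite big_distrr; apply: eq_bigr => s; rewrite inE => /andP[/forallP Qs Ps].
rewrite !sum1_card -[RHS]/(#|Z|^n * 1)%N muln1.
pose F := fun i : 'I_n => [pred x | (x \in G) && (coset Z x == s i)].
rewrite (@eq_card _ _ (family F)); last first.
  move=> t; apply/idP/familyP.
    rewrite [t \in _]unfold_in; case/andP; rewrite inE => /andP[/forallP Gt _] /eqP es i.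
    by rewrite /F inE Gt -es ffunE eqxx.
  move=> Ft; have Gt : forall i, t i \in G by move=> i; have := Ft i; rewrite /F inE => /andP[].
  have et : ctup t = s by apply/ffunP => i; rewrite ffunE; have := Ft i; rewrite /F inE => /andP[_ /eqP].
  rewrite [t \in _]unfold_in; by rewrite inE et Ps eqxx andbT andbT; apply/forallP.
rewrite card_family /image_mem (@eq_map _ _ _ (fun _ => #|Z|)); last first.
  by move=> i; exact: fiber_card (Qs i).
by rewrite foldr_const size_enum_ord.
Qed.
End Lift.

Section Count.
Variables (gT : finGroupType) (G : {group gT}) (b : bool) (n : nat).
Local Open Scope group_scope.
Local Notation Z := 'Z(G).
Local Notation Q := (G / 'Z(G)).

Definition Pq (a : coset_of Z) (s : {ffun 'I_n -> coset_of Z}) :=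
  [forall i, cmq a (s i)] && (b ==> [forall i, forall j, cmq (s i) (s j)]).
Definition Nq (a : coset_of Z) :=
  #|[set s : {ffun 'I_n -> coset_of Z} | [forall i, s i \in Q] && Pq a s]|.
Definition Sb := if b then comm_tuples_in G n else tuples_in G n.

Lemma acts_Sb : [acts G, on Sb | ctact gT n].
Proof.
apply/actsP => g Gg t; rewrite /Sb /=; case: b; rewrite !inE.
  congr andb.
    by apply: eq_forallb => i; rewrite ffunE groupJr.
  apply: eq_forallb => i; apply: eq_forallb => j; rewrite !ffunE -!conjMg.
  exact: (inj_eq (@conjg_inj _ g)).
by apply: eq_forallb => i; rewrite ffunE groupJr.
Qed.

Lemma fixE g : g \in G ->
  'Fix_(Sb | ctact gT n)[g] = [set t : {ffun 'I_n -> gT} | [forall i, t i \in G] && Pq (coset Z g) (ctup G t)].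
Proof.
move=> Gg; apply/setP => t; rewrite in_setI [in RHS]inE.
have -> : (t \in afix (ctact gT n) [set g]) = [forall i, t i * g == g * t i].
  apply/afix1P/forallP => /= [e i | e].
    by apply/eqP/commgP/conjg_fixP; rewrite -{2}e ffunE.
  by apply/ffunP => i; rewrite ffunE; apply/conjg_fixP/commgP/eqP.
have [Gt|nGt] := boolP [forall i, t i \in G]; last first.
  by rewrite /Sb; case: b; rewrite !inE (negPf nGt).
have {}Gt : forall i, t i \in G by apply/forallP.
rewrite /Pq /Sb; case: b; rewrite ?inE ?(introT forallP Gt) /=.
  rewrite andbC; congr andb.
    apply: eq_forallb => i; rewrite ffunE cmqE //; exact: eq_sym.
  apply: eq_forallb => i; apply: eq_forallb => j; rewrite !ffunE cmqE //.
rewrite andbT; apply: eq_forallb => i; rewrite ffunE cmqE //; exact: eq_sym.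
Qed.

Lemma countE :
  ((if b then beta G n else alpha G n) * #|G| = #|Z| ^ n.+1 * \sum_(a in Q) Nq a)%N.
Proof.
have -> : (if b then beta G n else alpha G n) = #|orbit (ctact gT n) G @: Sb|.
  by rewrite /Sb; case: b.
rewrite -(Frobenius_Cauchy acts_Sb).
rewrite (eq_bigr (fun g => #|Z| ^ n * Nq (coset Z g))%N); last first.
  by move=> g Gg; rewrite fixE // card_lift.
by rewrite -big_distrr /= sum_coset mulnA -expnSr.
Qed.
End Count.

Section Transfer.
Local Open Scope group_scope.
Variables (gT hT : finGroupType) (G : {group gT}) (H : {group hT}).
Variables (theta : {morphism G / 'Z(G) >-> coset_of 'Z(H)}) (phi : {morphism G^`(1) >-> hT}).
Hypotheses (thI : isom (G / 'Z(G)) (H / 'Z(H)) theta) (phI : isom G^`(1) H^`(1) phi).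
Hypothesis hyp : forall g1 g2 h1 h2, g1 \in G -> g2 \in G -> h1 \in H -> h2 \in H ->
        theta (coset 'Z(G) g1) = coset 'Z(H) h1 ->
        theta (coset 'Z(G) g2) = coset 'Z(H) h2 ->
        phi [~ g1, g2] = [~ h1, h2].

Lemma th_in a : a \in G / 'Z(G) -> theta a \in H / 'Z(H).
Proof. by move=> Qa; rewrite -(isom_im thI) mem_morphim. Qed.

Lemma cmq_transfer a c : a \in G / 'Z(G) -> c \in G / 'Z(G) ->
  cmq (theta a) (theta c) = cmq a c.
Proof.
move=> Qa Qc; rewrite /cmq.
have Gx := repr_inG Qa; have Gy := repr_inG Qc.
have Hx := repr_inG (th_in Qa); have Hy := repr_inG (th_in Qc).
have e := hyp Gx Gy Hx Hy.
rewrite !coset_reprK in e; have {}e := e (erefl _) (erefl _).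
have -> : (repr a * repr c == repr c * repr a) = ([~ repr a, repr c] == 1).
  by apply/eqP/commgP.
have -> : (repr (theta a) * repr (theta c) == repr (theta c) * repr (theta a))
        = ([~ repr (theta a), repr (theta c)] == 1).
  by apply/eqP/commgP.
rewrite -e morph_injm_eq1 ?(isom_inj phI) //.
by rewrite /= derg1 mem_commg.
Qed.

Lemma Pq_transfer b n a (s : {ffun 'I_n -> coset_of 'Z(G)}) :
  a \in G / 'Z(G) -> (forall i, s i \in G / 'Z(G)) ->
  Pq b (theta a) [ffun i => theta (s i)] = Pq b a s.
Proof.
move=> Qa Qs; rewrite /Pq; congr andb.
  by apply: eq_forallb => i; rewrite ffunE cmq_transfer.
congr implb; apply: eq_forallb => i; apply: eq_forallb => j.
by rewrite !ffunE cmq_transfer.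
Qed.

Lemma invth y : y \in H / 'Z(H) ->
  invm (isom_inj thI) y \in G / 'Z(G) /\ theta (invm (isom_inj thI) y) = y.
Proof.
rewrite -(isom_im thI) => Hy; split; last exact: invmK.
move: Hy; rewrite morphimEdom => /imsetP[x Qx ->].
by rewrite invmE.
Qed.

Lemma Nq_transfer b n a : a \in G / 'Z(G) -> Nq (G:=H) b n (theta a) = Nq (G:=G) b n a.
Proof.
move=> Qa; rewrite /Nq.
set SG := [set s : {ffun 'I_n -> coset_of 'Z(G)} | _].
rewrite -(@card_in_imset _ _ (fun s : {ffun 'I_n -> coset_of 'Z(G)} => [ffun i => theta (s i)]) SG); last first.
  move=> s1 s2; rewrite !inE => /andP[/forallP Q1 _] /andP[/forallP Q2 _] e.
  apply/ffunP => i; apply: (injmP (isom_inj thI)) => //.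
  by move/ffunP: e => /(_ i); rewrite !ffunE.
apply: eq_card => s'; rewrite inE; apply/idP/imsetP.
  case/andP => /forallP Qs' Ps'.
  exists [ffun i => invm (isom_inj thI) (s' i)].
    have Qs : forall i, [ffun i => invm (isom_inj thI) (s' i)] i \in G / 'Z(G).
      by move=> i; rewrite ffunE; case: (invth (Qs' i)).
    rewrite inE (introT forallP Qs) /= -Pq_transfer //.
    suff -> : [ffun i => theta ([ffun i0 => invm (isom_inj thI) (s' i0)] i)] = s' by [].
    by apply/ffunP => i; rewrite !ffunE; case: (invth (Qs' i)).
  by apply/ffunP => i; rewrite !ffunE; case: (invth (Qs' i)).
case=> s; rewrite inE => /andP[/forallP Qs Ps] ->.
rewrite Pq_transfer // Ps andbT; apply/forallP => i; rewrite ffunE th_in //.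
Qed.

Lemma sum_transfer b n :
  \sum_(c in H / 'Z(H)) Nq (G:=H) b n c = \sum_(a in G / 'Z(G)) Nq (G:=G) b n a.
Proof.
rewrite -(isom_im thI) morphimEdom big_imset /=.
  by apply: eq_bigr => a Qa; rewrite Nq_transfer.
by move=> x y Qx Qy; apply: (injmP (isom_inj thI)).
Qed.
End Transfer.

Lemma ratio (a z q S n : nat) : (0 < z)%N -> (0 < q)%N -> (a * (z * q) = z ^ n.+1 * S)%N ->
  ((a%:R / ((z * q)%:R ^+ n)) = S%:R / (q%:R ^+ n.+1) :> rat)%R.
Proof.
move=> z0 q0 e.
have e2 : (a * q ^ n.+1 = S * (z * q) ^ n)%N.
  apply/eqP; rewrite -(eqn_pmul2l z0); apply/eqP.
  transitivity (a * (z * q) * q ^ n)%N; first by rewrite expnS; ring.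
  by rewrite e expnMn expnS; ring.
apply/eqP; rewrite GRing.eqr_div.
- by rewrite -!natrX -!natrM e2.
- by rewrite expf_neq0 // pnatr_eq0 -lt0n muln_gt0 z0 q0.
- by rewrite expf_neq0 // pnatr_eq0 -lt0n q0.
Qed.

Lemma card_ZQ (gT : finGroupType) (G : {group gT}) :
  #|G| = (#|'Z(G)%g| * #|(G / 'Z(G))%g|)%N.
Proof.
by rewrite card_quotient ?Lagrange ?center_sub // normal_norm // center_normal.
Qed.

Unset Implicit Arguments.
Theorem theorem4p8 (gT hT : finGroupType) (G : {group gT}) (H : {group hT}) :
  isoclinic G H ->
  (forall n : nat,
     ((alpha G n)%:R / (#|G|%:R ^+ n) = (alpha H n)%:R / (#|H|%:R ^+ n) :> rat)%R) /\
  (forall n : nat,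
     ((beta G n)%:R / (#|G|%:R ^+ n) = (beta H n)%:R / (#|H|%:R ^+ n) :> rat)%R).
Proof.
case=> theta [phi [thI phI hyp]].
have eQ : #|(G / 'Z(G))%g| = #|(H / 'Z(H))%g| := isom_card thI.
have zG : (0 < #|'Z(G)%g|)%N := cardG_gt0 _.
have zH : (0 < #|'Z(H)%g|)%N := cardG_gt0 _.
have qG : (0 < #|(G / 'Z(G))%g|)%N := cardG_gt0 _.
have qH : (0 < #|(H / 'Z(H))%g|)%N by rewrite -eQ.
have key : forall b n, ((if b then beta G n else alpha G n)%:R / (#|G|%:R ^+ n)
   = (if b then beta H n else alpha H n)%:R / (#|H|%:R ^+ n) :> rat)%R.
  move=> b n.
  have eG := countE G b n; have eH := countE H b n.
  rewrite (sum_transfer thI phI hyp) in eH.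
  rewrite card_ZQ in eG; rewrite card_ZQ in eH.
  rewrite card_ZQ (ratio zG qG eG) card_ZQ (ratio zH qH eH) eQ.
  done.
by split=> n; [exact: (key false n) | exact: (key true n)].
Qed.
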